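(* Let $\mathcal{H}_T=\mathbb{C}^2$, let $\mathcal{H}_E$ be a finite-dimensional Hilbert space with $\dim\mathcal{H}_E\ge 2$ containing two fixed orthonormal vectors $\ket{0}_E,\ket{1}_E$, let $\ket{\chi}\in\mathcal{H}_E$ be a unit vector, let $\mathcal{B}=\{\ket{v_0},\ket{v_1}\}$ be an arbitrary orthonormal basis of $\mathcal{H}_T$, and let $U_F,U_R$ be unitary operators on $\mathcal{H}_T\otimes\mathcal{H}_E$ (a collective attack $(U_F,U_R)$). Then there exists a restricted attack $(q_0,q_1,\eta_0,\eta_1,U)$ with respect to $\mathcal{B}$, with associated forward isometry $\mathcal{F}$, such that the following holds. For every finite-dimensional Hilbert space $\mathcal{H}_A$ (Alice's private system), every unit vector $\ket{\psi}\in\mathcal{H}_A\otimes\mathcal{H}_T$, and each of Bob's two operations $O\in\{I,\ \mathrm{CNOT}\}$ acting on $\mathcal{H}_T\otimes\mathcal{H}_B$ (where $\mathcal{H}_B=\mathbb{C}^2$ is Bob's register, initialized to $\ket{0}_B$, $I$ is the identity (''Reflect'') and $\mathrm{CNOT}\ket{t}_T\ket{b}_B=\ket{t}_T\ket{b\oplus t}_B$ models ''Measure and Resend''), we have \[ (I_{AB}\otimes U)\,(O\otimes I_E)\,(I_A\otimes\mathcal{F})\ket{\psi}\ket{0}_B =(I_{AB}\otimes U_R)\,(O\otimes I_E)\,(I_A\otimes U_F)\big(\ket{\psi}\otimes\ket{\chi}_E\big)\ket{0}_B , \] (with each operator acting on the indicated tensor factors). Consequently, for any (pure or mixed) input, the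 joint final state of Alice, Bob and Eve is identical under the collective attack $(U_F,U_R)$ and the restricted attack; in particular Alice and Bob cannot distinguish the two attacks, Eve's final system is the same, and the Devetak–Winter key-rate $S(A|E)-H(A|B)$ is the same under both.
   Context: Semi-quantum setting: each round Alice sends a qubit (system $T$) to Bob through a forward channel; Bob either reflects it (identity) or measures it in the computational basis $\{\ket 0,\ket 1\}$ and resends the observed state, which is modeled as a CNOT from $T$ into his private register $B$; the qubit then returns to Alice through a reverse channel. A collective attack is a pair of unitaries $(U_F,U_R)$ on $\mathcal{H}_T\otimes\mathcal{H}_E$: Eve's ancilla starts in $\ket{\chi}_E$, $U_F$ is applied in the forward channel and $U_R$ in the reverse channel. $\mathbb{D}=\{z\in\mathbb{C}:|z|\le1\}$. A restricted attack with respect to an orthonormal basis $\{\ket{v_0},\ket{v_1}\}$ of $\mathcal{H}_T$ is a tuple $(q_0,q_1,\eta_0,\eta_1,U)$ with $q_0,q_1\in[0,1]$, $\eta_0,\eta_1\in\mathbb{D}$ satisfying $q_0\eta_1\sqrt{1-q_1^2}+q_1\overline{\eta_0}\sqrt{1-q_0^2}=0$, and $U$ a unitary on $\mathcal{H}_T\otimes\mathcal{H}_E$. Its forward operation is the linear map $\mathcal{F}:\mathcal{H}_T\to\mathcal{H}_T\otimes\mathcal{H}_E$ defined by $\mathcal{F}\ket{v_0}=q_0\ket{0}_T\ket{0}_E+\sqrt{1-q_0^2}\ket{1}_T\ket{e}_E$ and $\mathcal{F}\ket{v_1}=\sqrt{1-q_1^2}\ket{0}_T\ket{f}_E+q_1\ket{1}_T\ket{0}_E$,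 where $\ket{e}=\eta_0\ket{0}_E+\sqrt{1-|\eta_0|^2}\ket{1}_E$ and $\ket{f}=\eta_1\ket{0}_E+\sqrt{1-|\eta_1|^2}\ket{1}_E$ (the constraint makes $\mathcal{F}$ an isometry); in the reverse channel Eve applies $U$. *)

(* Defs.v *)
(* Scalars: an arbitrary numClosedFieldType C (e.g. algC;
   the complex numbers are the paper's instance).  Finite-dimensional Hilbert
   spaces are C^X for a finite index type X; vectors are functions X -> C,
   operators are kernels X -> X -> C (out-index first). *)
From HB Require Import structures.
From mathcomp Require Import all_boot all_order all_algebra.
Set Implicit Arguments. Unset Strict Implicit. Unset Printing Implicit Defensive.
Import Order.TTheory GRing.Theory Num.Theory.
Local Open Scope ring_scope.

Section QDefs.
Variable C : numClosedFieldType.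

Definition dotv (X : finType) (u v : X -> C) : C := \sum_x (u x)^* * v x.

Definition unit_vec (X : finType) (u : X -> C) : Prop := dotv u u = 1.

Definition orthonormal2 (X : finType) (u0 u1 : X -> C) : Prop :=
  [/\ dotv u0 u0 = 1, dotv u1 u1 = 1 & dotv u0 u1 = 0].

Definition unitary (X : finType) (M : X -> X -> C) : Prop :=
  (forall x y, \sum_z (M z x)^* * M z y = (x == y)%:R) /\
  (forall x y, \sum_z M x z * (M y z)^* = (x == y)%:R).

Definition TE (n : nat) : finType := ('I_2 * 'I_n)%type.

Definition in_disk (z : C) : bool := `|z| <= 1.

Definition restricted_attack (n : nat) (q0 q1 eta0 eta1 : C)
    (U : TE n -> TE n -> C) : Prop :=
  [/\ (0 <= q0 <= 1) && (0 <= q1 <= 1), in_disk eta0 && in_disk eta1,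
      q0 * eta1 * sqrtC (1 - q1 ^+ 2) + q1 * eta0^* * sqrtC (1 - q0 ^+ 2) = 0
    & unitary U].

Definition ket_e (n : nat) (e0 e1 : 'I_n -> C) (eta : C) : 'I_n -> C :=
  fun k => eta * e0 k + sqrtC (1 - `|eta| ^+ 2) * e1 k.

(* F|v_i>, as an amplitude function on T x E *)
Definition fwd_basis (n : nat) (e0 e1 : 'I_n -> C) (q0 q1 eta0 eta1 : C)
    (i : 'I_2) (te : TE n) : C :=
  let t := te.1 in let k := te.2 in
  if i == 0 :> nat then
    (if t == 0 :> nat then q0 * e0 k
     else sqrtC (1 - q0 ^+ 2) * ket_e e0 e1 eta0 k)
  else
    (if t == 0 :> nat then sqrtC (1 - q1 ^+ 2) * ket_e e0 e1 eta1 k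
     else q1 * e0 k).

(* (I_A (x) F) applied to psi in H_A (x) H_T, with F the linear map determined
   by F|v_i> := fwd_basis i for the orthonormal basis v_0, v_1:
   F x = sum_i <v_i|x> F|v_i>. *)
Definition fwd_restricted (m n : nat) (v : 'I_2 -> 'I_2 -> C)
    (e0 e1 : 'I_n -> C) (q0 q1 eta0 eta1 : C) (psi : 'I_m -> 'I_2 -> C)
    (a : 'I_m) (te : TE n) : C :=
  \sum_(i < 2) dotv (v i) (psi a) * fwd_basis e0 e1 q0 q1 eta0 eta1 i te.

Definition fwd_collective (m n : nat) (UF : TE n -> TE n -> C)
    (chi : 'I_n -> C) (psi : 'I_m -> 'I_2 -> C) (a : 'I_m) (te : TE n) : C :=
  \sum_(te' : TE n) UF te te' * (psi a te'.1 * chi te'.2).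

Inductive bob_op := Reflect | MeasureResend.

Definition xor2 (b t : 'I_2) : 'I_2 := inord ((b + t) %% 2).

(* matrix kernel of O on T x B : ((t',b'),(t,b)) *)
Definition bob_mx (O : bob_op) (out inp : 'I_2 * 'I_2) : C :=
  match O with
  | Reflect => ((out.1 == inp.1) && (out.2 == inp.2))%:R
  | MeasureResend => ((out.1 == inp.1) && (out.2 == xor2 inp.2 inp.1))%:R
  end.

(* (O (x) I_E) applied to phi (x) |0>_B, phi in A (x) T (x) E;
   result indexed by (a, b, (t,e)) *)
Definition bob_step (m n : nat) (O : bob_op) (phi : 'I_m -> TE n -> C)
    (a : 'I_m) (b : 'I_2) (te : TE n) : C :=
  \sum_(t1 < 2) \sum_(b1 < 2)
     bob_mx O (te.1, b) (t1, b1) * ((b1 == 0 :> nat)%:R * phi a (t1, te.2)).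

Definition eve_step (m n : nat) (U : TE n -> TE n -> C)
    (Phi : 'I_m -> 'I_2 -> TE n -> C) (a : 'I_m) (b : 'I_2) (te : TE n) : C :=
  \sum_(te' : TE n) U te te' * Phi a b te'.

End QDefs.

(* Main.v *)
Require Import Defs.
From HB Require Import structures.
From mathcomp Require Import all_boot all_order all_algebra ring lra.
Import Order.TTheory GRing.Theory Num.Theory.
Set Implicit Arguments. Unset Strict Implicit.
Local Open Scope ring_scope.

Definition app (C : numClosedFieldType) (X : finType) (M : X -> X -> C) (x : X -> C) : X -> C :=
  fun j => \sum_k M j k * x k.
Definition comp (C : numClosedFieldType) (X : finType) (M N : X -> X -> C) : X -> X -> C :=
  fun j k => \sum_l M j l * N l k.

Lemma sum_delta (C : numClosedFieldType) (X : finType) (x : X) (F : X -> C) :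
  \sum_z ((z == x)%:R * F z) = F x.
Proof.
rewrite (bigD1 x) //= eqxx mul1r big1 ?addr0 // => z /negbTE ->; by rewrite mul0r.
Qed.

Lemma sum_delta' (C : numClosedFieldType) (X : finType) (x : X) (F : X -> C) :
  \sum_z ((x == z)%:R * F z) = F x.
Proof. rewrite -(sum_delta x F); apply: eq_bigr => z _; by rewrite eq_sym. Qed.

Lemma conj_dotv (C : numClosedFieldType) (X : finType) (u v : X -> C) :
  (dotv u v)^* = dotv v u.
Proof.
rewrite /dotv rmorph_sum; apply: eq_bigr => k _.
by rewrite rmorphM /= conjCK mulrC.
Qed.

Lemma dotv_lin (C : numClosedFieldType) (X : finType) (a b c d : C)
  (u v s t f g : X -> C) :
  (forall k, f k = a * u k + b * v k) -> (forall k, g k = c * s k + d * t k) ->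
  dotv f g = a^* * c * dotv u s + a^* * d * dotv u t
           + b^* * c * dotv v s + b^* * d * dotv v t.
Proof.
move=> hf hg; rewrite /dotv !mulr_sumr -!big_split /=; apply: eq_bigr => k _.
rewrite hf hg rmorphD !rmorphM /=; ring.
Qed.

Lemma dotv_ge0 (C : numClosedFieldType) (X : finType) (u : X -> C) : 0 <= dotv u u.
Proof. apply: sumr_ge0 => k _; by rewrite -normCKC exprn_ge0. Qed.

Lemma dotv_real (C : numClosedFieldType) (X : finType) (u : X -> C) : (dotv u u)^* = dotv u u.
Proof. exact: geC0_conj (dotv_ge0 u). Qed.

Lemma dotv_eq0 (C : numClosedFieldType) (X : finType) (u : X -> C) :
  dotv u u = 0 -> forall k, u k = 0.
Proof.
move=> h k; have := @psumr_eq0P C X predT (fun k => (u k)^* * u k).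
move/(_ (fun k _ => _)) => H.
have /eqP: (u k)^* * u k = 0.
  apply: H => //; first by move=> i; rewrite -normCKC exprn_ge0.
by rewrite -normCKC expf_eq0 /= normr_eq0 => /eqP.
Qed.

Lemma CS (C : numClosedFieldType) (X : finType) (x y : X -> C) :
  `|dotv x y| ^+ 2 <= dotv x x * dotv y y.
Proof.
have [h0|hn] := eqVneq (dotv x x) 0.
  have hx := dotv_eq0 h0.
  have -> : dotv x y = 0 by rewrite /dotv big1 // => k _; rewrite hx conjC0 mul0r.
  by rewrite h0 normr0 expr0n mul0r.
set a := dotv x x; set d := dotv x y.
have ha : 0 < a by rewrite lt_def hn dotv_ge0.
have := dotv_ge0 (fun k => a * y k + (- d) * x k).
rewrite (dotv_lin (a:=a) (b:=-d) (c:=a) (d:=-d) (u:=y) (v:=x) (s:=y) (t:=x)) //.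
move=> H.
have ca : a^* = a by rewrite /a dotv_real.
rewrite -(conj_dotv x y) -/d -/a ca rmorphN /= in H.
suff: 0 <= a * (a * dotv y y - d * d^*) by rewrite pmulr_rge0 // subr_ge0 normCK.
apply: (le_trans H); rewrite le_eqVlt; apply/orP; left; apply/eqP; ring.
Qed.

Lemma app_comp (C : numClosedFieldType) (X : finType) (M N : X -> X -> C) x j :
  app (comp M N) x j = app M (app N x) j.
Proof.
rewrite /app /comp; under eq_bigr => k _ do rewrite mulr_suml.
rewrite exchange_big /=; apply: eq_bigr => l _; rewrite mulr_sumr.
by apply: eq_bigr => k _; rewrite mulrA.
Qed.

Lemma unitary_dot1 (C : numClosedFieldType) (X : finType) (M : X -> X -> C) x y :
  (forall x y : X, \sum_z (M z x)^* * M z y = (x == y)%:R) ->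
  dotv (app M x) (app M y) = dotv x y.
Proof.
move=> h1; rewrite /dotv /app.
under eq_bigr => z _ do rewrite rmorph_sum mulr_suml.
rewrite exchange_big /=; apply: eq_bigr => k _.
under eq_bigr => z _ do rewrite mulr_sumr.
rewrite exchange_big /=.
rewrite (bigD1 k) //= [X in _ + X]big1 ?addr0.
  have := h1 k k; rewrite eqxx /= => h.
  transitivity ((\sum_z (M z k)^* * M z k) * ((x k)^* * y k)); last by rewrite h mul1r.
  rewrite mulr_suml; apply: eq_bigr => z _.
  rewrite rmorphM /=; ring.
move=> l hl.
have := h1 k l; rewrite eq_sym (negbTE hl) /= => h.
transitivity ((\sum_z (M z k)^* * M z l) * ((x k)^* * y l)); last by rewrite h mul0r.
rewrite mulr_suml; apply: eq_bigr => z _; rewrite rmorphM /=; ring.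
Qed.

Lemma unitary_dot (C : numClosedFieldType) (X : finType) (M : X -> X -> C) x y :
  unitary M -> dotv (app M x) (app M y) = dotv x y.
Proof. by case=> h1 _; apply: unitary_dot1. Qed.

Definition adj (C : numClosedFieldType) (X : finType) (M : X -> X -> C) : X -> X -> C :=
  fun j k => (M k j)^*.

Lemma comp_p1 (C : numClosedFieldType) (X : finType) (M N : X -> X -> C) :
  (forall x y : X, \sum_z (M z x)^* * M z y = (x == y)%:R) ->
  (forall x y : X, \sum_z (N z x)^* * N z y = (x == y)%:R) ->
  (forall x y : X, \sum_z (comp M N z x)^* * comp M N z y = (x == y)%:R).
Proof.
move=> hM hN x y.
have := unitary_dot1 (fun l => N l x) (fun l => N l y) hM.
rewrite /dotv /app /comp => ->; exact: hN.
Qed.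

Lemma adj_comp (C : numClosedFieldType) (X : finType) (M N : X -> X -> C) j k :
  adj (comp M N) j k = comp (adj N) (adj M) j k.
Proof.
rewrite /adj /comp rmorph_sum; apply: eq_bigr => l _; rewrite rmorphM /=; ring.
Qed.

Lemma unitary_comp (C : numClosedFieldType) (X : finType) (M N : X -> X -> C) :
  unitary M -> unitary N -> unitary (comp M N).
Proof.
case=> hM1 hM2 [hN1 hN2]; split; first exact: comp_p1.
have hA : forall P : X -> X -> C, (forall x y : X, \sum_z P x z * (P y z)^* = (x == y)%:R) ->
   (forall x y : X, \sum_z (adj P z x)^* * adj P z y = (x == y)%:R).
  by move=> P hP x y; rewrite -hP; apply: eq_bigr => z _; rewrite /adj conjCK.
move=> x y; have := comp_p1 (hA _ hN2) (hA _ hM2) x y.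
move=> <-; apply: eq_bigr => z _; rewrite -!adj_comp /adj conjCK.
by rewrite mulrC.
Qed.

Lemma rank1_unitary (C : numClosedFieldType) (X : finType) (w : X -> C) (c : C) :
  c + c^* = c * c^* * dotv w w ->
  unitary (fun j k => (j == k)%:R - c * w j * (w k)^*).
Proof.
move=> hc; split=> x y.
- transitivity (\sum_z ((z == x)%:R * (z == y)%:R - (z == x)%:R * (c * w z * (w y)^*)
      - (z == y)%:R * (c^* * (w z)^* * w x) + (c * c^* * w x * (w y)^*) * ((w z)^* * w z))).
    apply: eq_bigr => z _; rewrite rmorphB !rmorphM /= conjC_nat conjCK; ring.
  rewrite !big_split /= !sumrN !sum_delta -mulr_sumr -/(dotv w w).
  have -> : c * c^* * w x * (w y)^* * dotv w w = (c + c^*) * w x * (w y)^*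
    by rewrite hc; ring.
  ring.
- transitivity (\sum_z ((x == z)%:R * (y == z)%:R - (y == z)%:R * (c * w x * (w z)^*)
      - (x == z)%:R * (c^* * (w y)^* * w z) + (c * c^* * w x * (w y)^*) * ((w z)^* * w z))).
    apply: eq_bigr => z _; rewrite rmorphB !rmorphM /= conjC_nat conjCK; ring.
  rewrite !big_split /= !sumrN !sum_delta' -mulr_sumr -/(dotv w w).
  rewrite [y == x]eq_sym.
  have -> : c * c^* * w x * (w y)^* * dotv w w = (c + c^*) * w x * (w y)^*
    by rewrite hc; ring.
  ring.
Qed.

Lemma app_rank1 (C : numClosedFieldType) (X : finType) (w : X -> C) (c : C) u j :
  app (fun j k => (j == k)%:R - c * w j * (w k)^*) u j = u j - c * w j * dotv w u.
Proof.
rewrite /app /dotv.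
under eq_bigr => k _ do rewrite mulrBl.
by rewrite sumrB sum_delta' mulr_sumr; congr (_ - _); apply: eq_bigr => k _; rewrite mulrA.
Qed.

Lemma householder (C : numClosedFieldType) (X : finType) (x y : X -> C) :
  dotv x x = dotv y y -> exists M : X -> X -> C, [/\ unitary M,
    (forall j, app M x j = y j) &
    (forall u, dotv (fun k => x k - y k) u = 0 -> forall j, app M u j = u j)].
Proof.
move=> hxy; set w := fun k => x k - y k.
set d := dotv w x.
have hd : d = dotv x x - dotv y x.
  rewrite /d (dotv_lin (a:=1) (b:=-1) (c:=1) (d:=0) (u:=x) (v:=y) (s:=x) (t:=x)) => [|k|k].
  - by rewrite rmorphN rmorph1 /=; ring.
  - by rewrite /w; ring.
  - by ring.
have hww : dotv w w = d + d^*.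
  rewrite (dotv_lin (a:=1) (b:=-1) (c:=1) (d:=-1) (u:=x) (v:=y) (s:=x) (t:=y)) => [|k|k].
  - rewrite hd rmorphB /= !conj_dotv -hxy rmorphN rmorph1 /=; ring.
  - by rewrite /w; ring.
  - by rewrite /w; ring.
exists (fun j k => (j == k)%:R - (if d == 0 then 0 else d^-1) * w j * (w k)^*).
split.
- apply: rank1_unitary; case: eqP => hd0.
    by rewrite rmorph0 mulr0 mul0r addr0.
  have hd1 : d^* != 0 by rewrite conjC_eq0; apply/eqP.
  rewrite hww fmorphV /=; field; apply/andP; split=> //; exact/eqP.
- move=> j; rewrite app_rank1 -/d; case: eqP => hd0.
    have hw0 : dotv w w = 0 by rewrite hww hd0 rmorph0 addr0.
    have hw := dotv_eq0 hw0.
    have := hw j; rewrite /w => /eqP; rewrite subr_eq0 => /eqP ->; ring.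
  rewrite /w; field; exact/eqP.
- by move=> u hu j; rewrite app_rank1 -/w hu mulr0 subr0.
Qed.

Lemma dotv_ext (C : numClosedFieldType) (X : finType) (f f' g g' : X -> C) :
  (forall k, f k = f' k) -> (forall k, g k = g' k) -> dotv f g = dotv f' g'.
Proof. by move=> h1 h2; apply: eq_bigr => k _; rewrite h1 h2. Qed.

Lemma app_ext (C : numClosedFieldType) (X : finType) (M : X -> X -> C) (f g : X -> C) j :
  (forall k, f k = g k) -> app M f j = app M g j.
Proof. by move=> h; apply: eq_bigr => k _; rewrite h. Qed.

Lemma pair_map (C : numClosedFieldType) (X : finType) (x0 x1 y0 y1 : X -> C) :
  dotv x0 x0 = dotv y0 y0 -> dotv x1 x1 = dotv y1 y1 -> dotv x0 x1 = dotv y0 y1 ->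
  exists M : X -> X -> C, [/\ unitary M,
    (forall j, app M x0 j = y0 j) & (forall j, app M x1 j = y1 j)].
Proof.
move=> h00 h11 h01.
have [H1 [uH1 mH1 _]] := householder h00.
set z := app H1 x1.
have hz : dotv z z = dotv y1 y1 by rewrite unitary_dot.
have [H2 [uH2 mH2 fH2]] := householder hz.
exists (comp H2 H1); split.
- exact: unitary_comp.
- move=> j; rewrite app_comp (app_ext _ _ mH1); apply: fH2.
  rewrite (dotv_lin (a:=1) (b:=-1) (c:=1) (d:=0) (u:=z) (v:=y1) (s:=y0) (t:=y0)) => [|k|k]; last by ring.
    rewrite rmorphN rmorph1 /=.
    have -> : dotv z y0 = dotv x1 x0.
      by rewrite -(unitary_dot x1 x0 uH1); apply: dotv_ext => // k; rewrite mH1.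
    rewrite -conj_dotv h01 conj_dotv; ring.
  by ring.
- by move=> j; rewrite app_comp mH2.
Qed.

Lemma I2_cases (i : 'I_2) : i = ord0 \/ i = ord_max.
Proof. case: i => [[|[|]]] //= p; [left|right]; exact: val_inj. Qed.

Lemma sum_I2 (C : numClosedFieldType) (F : 'I_2 -> C) : \sum_(i < 2) F i = F ord0 + F ord_max.
Proof. rewrite big_ord_recl big_ord_recl big_ord0 addr0; congr (_ + F _); exact: val_inj. Qed.

Lemma sum_pair (C : numClosedFieldType) (I X : finType) (F : (I * X)%type -> C) :
  \sum_p F p = \sum_i \sum_k F (i, k).
Proof. by rewrite pair_bigA; apply: eq_bigr => -[]. Qed.

Lemma dotv_TE (C : numClosedFieldType) (n : nat) (f g : TE n -> C) :
  dotv f g = dotv (fun k => f (ord0, k)) (fun k => g (ord0, k))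
           + dotv (fun k => f (ord_max, k)) (fun k => g (ord_max, k)).
Proof. by rewrite /dotv sum_pair sum_I2. Qed.

Lemma dotv_prod (C : numClosedFieldType) (I X : finType) (f f' : I -> C) (g g' : X -> C) :
  dotv (fun p : (I * X)%type => f p.1 * g p.2) (fun p => f' p.1 * g' p.2)
  = dotv f f' * dotv g g'.
Proof.
rewrite /dotv sum_pair mulr_suml.
apply: eq_bigr => i _; rewrite mulr_sumr; apply: eq_bigr => k _.
rewrite rmorphM /=; ring.
Qed.

Definition blk (C : numClosedFieldType) (I X : finType) (W : I -> X -> X -> C) :
  (I * X)%type -> (I * X)%type -> C :=
  fun p p' => (p.1 == p'.1)%:R * W p.1 p.2 p'.2.

Lemma blk_unitary (C : numClosedFieldType) (I X : finType) (W : I -> X -> X -> C) :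
  (forall i, unitary (W i)) -> unitary (blk W).
Proof.
move=> hW; split=> -[x1 x2] [y1 y2].
- rewrite sum_pair /=.
  rewrite (bigD1 x1) //= [X in _ + X]big1 ?addr0; last first.
    move=> t /negbTE ht; apply: big1 => k _.
    by rewrite /blk /= ht mul0r rmorph0 mul0r.
  rewrite /blk /= eqxx xpair_eqE.
  have [e|ne] := eqVneq x1 y1.
    subst y1; rewrite /=; have := (hW x1).1 x2 y2 => <-.
    by apply: eq_bigr => k _; rewrite rmorphM /= conjC_nat; ring.
  by rewrite /=; apply: big1 => k _; rewrite !mul0r mulr0.
- rewrite sum_pair /=.
  rewrite (bigD1 x1) //= [X in _ + X]big1 ?addr0; last first.
    move=> t ht; apply: big1 => k _.
    by rewrite /blk /= eq_sym (negbTE ht) mul0r mul0r.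
  rewrite /blk /= eqxx xpair_eqE.
  have [e|ne] := eqVneq x1 y1.
    subst y1; rewrite /=; have := (hW x1).2 x2 y2 => <-.
    by apply: eq_bigr => k _; rewrite rmorphM /= conjC_nat; ring.
  by rewrite /=; apply: big1 => k _; rewrite mul0r rmorph0 !mulr0.
Qed.

Definition bob_g (C : numClosedFieldType) (O : bob_op) (b t : 'I_2) : C :=
  \sum_(b1 < 2) bob_mx C O (t, b) (t, b1) * (b1 == 0 :> nat)%:R.

Lemma bob_mx0 (C : numClosedFieldType) O (t t1 b b1 : 'I_2) :
  t1 != t -> bob_mx C O (t, b) (t1, b1) = 0.
Proof. by move=> h; case: O => /=; rewrite eq_sym (negbTE h). Qed.

Lemma bob_formula (C : numClosedFieldType) (m n : nat) O (phi : 'I_m -> TE n -> C) a b te :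
  bob_step O phi a b te = bob_g C O b te.1 * phi a (te.1, te.2).
Proof.
rewrite /bob_step (bigD1 te.1) //= [X in _ + X]big1 ?addr0; last first.
  by move=> t ht; apply: big1 => b1 _; rewrite bob_mx0 // mul0r.
rewrite /bob_g mulr_suml; apply: eq_bigr => b1 _; ring.
Qed.

Lemma blk_bob (C : numClosedFieldType) (m n : nat) (W : 'I_2 -> 'I_n -> 'I_n -> C) O
   (phi : 'I_m -> TE n -> C) a b te :
  app (blk W) (bob_step O phi a b) te = bob_step O (fun a => app (blk W) (phi a)) a b te.
Proof.
rewrite [RHS]bob_formula /app mulr_sumr; apply: eq_bigr => -[t k] _.
rewrite bob_formula /blk /=; case: eqP => [->|_]; first ring.
by rewrite !mul0r mulr0.
Qed.

Lemma complete2 (C : numClosedFieldType) (v : 'I_2 -> 'I_2 -> C) :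
  orthonormal2 (v 0) (v 1) -> forall (psi : 'I_2 -> C) t,
  psi t = \sum_(i < 2) dotv (v i) psi * v i t.
Proof.
have E0 : (0 : 'I_2) = ord0 by apply: val_inj.
have E1 : (1 : 'I_2) = ord_max by apply: val_inj.
rewrite E0 E1; case=> h00 h11 h01 psi t.
pose A : 'M[C]_2 := \matrix_(i, s) (v i s)^*.
pose B : 'M[C]_2 := \matrix_(s, i) v i s.
have hAB : A *m B = 1%:M.
  apply/matrixP => i j; rewrite !mxE.
  have -> : \sum_j0 A i j0 * B j0 j = dotv (v i) (v j).
    by apply: eq_bigr => s _; rewrite !mxE.
  have [->|->] := I2_cases i; have [->|->] := I2_cases j => //=.
  - by rewrite -conj_dotv h01 conjC0.
have hBA := mulmx1C hAB.
transitivity (\sum_s psi s * (B *m A) t s).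
  by rewrite hBA (bigD1 t) //= !mxE eqxx mulr1 big1 ?addr0 // => s hs; rewrite !mxE eq_sym (negbTE hs) mulr0.
rewrite [RHS](eq_bigr (fun i => \sum_s (v i s)^* * psi s * v i t)); last first.
  by move=> i _; rewrite /dotv big_distrl.
rewrite exchange_big /=; apply: eq_bigr => s _; rewrite !mxE mulr_sumr.
by apply: eq_bigr => i _; rewrite !mxE; ring.
Qed.

Lemma eta_lem (C : numClosedFieldType) (p d : C) :
  0 <= p -> `|d| ^+ 2 <= p ^+ 2 ->
  p * (if p == 0 then 0 else d / p) = d /\ `|if p == 0 then 0 else d / p| <= 1.
Proof.
move=> hp hd; case: eqP => [p0|/eqP pn0].
  move: hd; rewrite p0 expr0n /= => hd.
  have : `|d| ^+ 2 == 0 by rewrite eq_le hd exprn_ge0.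
  by rewrite expf_eq0 /= normr_eq0 => /eqP ->; rewrite mulr0 normr0.
split; first by rewrite mulrC divfK.
have hp' : 0 < p by rewrite lt_def pn0 hp.
rewrite normf_div (ger0_norm hp) ler_pdivrMr // mul1r.
by rewrite -(ler_pXn2r (n:=2)) // nnegrE ?normr_ge0.
Qed.

Lemma gram_ket (C : numClosedFieldType) (n : nat) (e0 e1 : 'I_n -> C) (s q eta : C) :
  orthonormal2 e0 e1 -> 0 <= s -> 0 <= q -> `|eta| <= 1 ->
  [/\ dotv (fun k => s * ket_e e0 e1 eta k) (fun k => s * ket_e e0 e1 eta k) = s ^+ 2,
      dotv (fun k => q * e0 k) (fun k => q * e0 k) = q ^+ 2,
      dotv (fun k => q * e0 k) (fun k => s * ket_e e0 e1 eta k) = q * s * eta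
    & dotv (fun k => s * ket_e e0 e1 eta k) (fun k => q * e0 k) = s * q * eta^*].
Proof.
case=> h00 h11 h01 hs hq he.
set r := sqrtC (1 - `|eta| ^+ 2).
have hr0 : 0 <= 1 - `|eta| ^+ 2 by rewrite subr_ge0 expr_le1 ?normr_ge0.
have hrr : r ^+ 2 = 1 - `|eta| ^+ 2 by rewrite sqrtCK.
have cr : r^* = r by apply: geC0_conj; rewrite sqrtC_ge0.
have cs : s^* = s by apply: geC0_conj.
have cq : q^* = q by apply: geC0_conj.
have h10 : dotv e1 e0 = 0 by rewrite -conj_dotv h01 conjC0.
have hk : forall k, s * ket_e e0 e1 eta k = (s * eta) * e0 k + (s * r) * e1 k.
  by move=> k; rewrite /ket_e -/r; ring.
have hq0 : forall k, q * e0 k = q * e0 k + 0 * e1 k by move=> k; ring.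
split.
- rewrite (dotv_lin hk hk) !rmorphM /= cr cs h00 h11 h01 h10.
  have : `|eta| ^+ 2 = eta^* * eta by rewrite normCKC.
  move=> hn.
  transitivity (s ^+ 2 * (`|eta| ^+ 2 + r ^+ 2)); first by rewrite hn; ring.
  by rewrite hrr addrC subrK mulr1.
- by rewrite (dotv_lin hq0 hq0) cq h00 h01 h10 h11; ring.
- by rewrite (dotv_lin hq0 hk) cq rmorph0 h00 h01 h10 h11; ring.
- by rewrite (dotv_lin hk hq0) !rmorphM /= cr cs h00 h01 h10 h11; ring.
Qed.

Lemma app_blk (C : numClosedFieldType) (n : nat) (W : 'I_2 -> 'I_n -> 'I_n -> C) (f : TE n -> C) t k :
  app (blk W) f (t, k) = app (W t) (fun k' => f (t, k')) k.
Proof.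
rewrite /app sum_pair (bigD1 t) //= [X in _ + X]big1 ?addr0.
  by apply: eq_bigr => k' _; rewrite /blk /= eqxx mul1r.
by move=> t' ht; apply: big1 => k' _; rewrite /blk /= eq_sym (negbTE ht) !mul0r.
Qed.

Unset Implicit Arguments.

Theorem theorem1 (C : numClosedFieldType) (n : nat) (hn : (2 <= n)%N)
  (e0 e1 : 'I_n -> C) (he : orthonormal2 e0 e1)
  (chi : 'I_n -> C) (hchi : unit_vec chi)
  (v : 'I_2 -> 'I_2 -> C) (hv : orthonormal2 (v 0) (v 1))
  (UF UR : TE n -> TE n -> C) (hUF : unitary UF) (hUR : unitary UR) :
  exists (q0 q1 eta0 eta1 : C) (U : TE n -> TE n -> C),
    restricted_attack q0 q1 eta0 eta1 U /\
    forall (m : nat) (psi : 'I_m -> 'I_2 -> C),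
      unit_vec (fun x : 'I_m * 'I_2 => psi x.1 x.2) ->
      forall (O : bob_op) (a : 'I_m) (b : 'I_2) (te : TE n),
        eve_step U (bob_step O (fwd_restricted v e0 e1 q0 q1 eta0 eta1 psi)) a b te
        = eve_step UR (bob_step O (fwd_collective UF chi psi)) a b te.
Proof.
have hvc := complete2 hv.
have E0 : (0 : 'I_2) = ord0 by apply: val_inj.
have E1 : (1 : 'I_2) = ord_max by apply: val_inj.
move: hv; rewrite E0 E1 => -[hv00 hv11 hv01].
pose Gv (i : 'I_2) := app UF (fun p : TE n => v i p.1 * chi p.2).
have hG : forall i j, dotv (Gv i) (Gv j) = dotv (v i) (v j).
  move=> i j; rewrite /Gv unitary_dot // dotv_prod.
  by rewrite /unit_vec in hchi; rewrite hchi mulr1.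
pose a (i : 'I_2) := fun k => Gv i (ord0, k).
pose b (i : 'I_2) := fun k => Gv i (ord_max, k).
have hGab : forall i j, dotv (Gv i) (Gv j) = dotv (a i) (a j) + dotv (b i) (b j).
  by move=> i j; rewrite dotv_TE.
set aa0 := dotv (a ord0) (a ord0).
set aa1 := dotv (a ord_max) (a ord_max).
set bb0 := dotv (b ord0) (b ord0).
set bb1 := dotv (b ord_max) (b ord_max).
set ab := dotv (a ord0) (a ord_max).
set bbx := dotv (b ord0) (b ord_max).
have h0 : aa0 + bb0 = 1 by rewrite -hGab hG hv00.
have h1 : aa1 + bb1 = 1 by rewrite -hGab hG hv11.
have h01 : ab + bbx = 0 by rewrite -hGab hG hv01.
have gaa0 : 0 <= aa0 := dotv_ge0 _.
have gaa1 : 0 <= aa1 := dotv_ge0 _.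
have gbb0 : 0 <= bb0 := dotv_ge0 _.
have gbb1 : 0 <= bb1 := dotv_ge0 _.
pose q0 := sqrtC aa0. pose s1 := sqrtC aa1. pose s0 := sqrtC bb0. pose q1 := sqrtC bb1.
have gq0 : 0 <= q0 by rewrite sqrtC_ge0.
have gq1 : 0 <= q1 by rewrite sqrtC_ge0.
have gs0 : 0 <= s0 by rewrite sqrtC_ge0.
have gs1 : 0 <= s1 by rewrite sqrtC_ge0.
have hs0 : sqrtC (1 - q0 ^+ 2) = s0 by rewrite sqrtCK -h0 addrC addKr.
have hs1 : sqrtC (1 - q1 ^+ 2) = s1 by rewrite sqrtCK -h1 addrK.
pose eta1 := if q0 * s1 == 0 then 0 else ab / (q0 * s1).
pose eta0 := if s0 * q1 == 0 then 0 else bbx^* / (s0 * q1).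
have [heta1 neta1] : q0 * s1 * eta1 = ab /\ `|eta1| <= 1.
  apply: eta_lem; first exact: mulr_ge0.
  by rewrite exprMn !sqrtCK; apply: CS.
have [heta0 neta0] : s0 * q1 * eta0 = bbx^* /\ `|eta0| <= 1.
  apply: eta_lem; first exact: mulr_ge0.
  by rewrite exprMn !sqrtCK norm_conjC; apply: CS.
have heta0' : s0 * q1 * eta0^* = bbx.
  by rewrite -[bbx]conjCK -heta0 !rmorphM /= (geC0_conj gs0) (geC0_conj gq1).
have [gx00 gx11 gx01 _] := gram_ket he gs1 gq0 neta1.
have [gy00 gy11 _ gy01] := gram_ket he gs0 gq1 neta0.
have [W0 [uW0 mW00 mW01]] := pair_map (x0 := fun k => q0 * e0 k)
   (x1 := fun k => s1 * ket_e e0 e1 eta1 k) (y0 := a ord0) (y1 := a ord_max)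
   (etrans gx11 (sqrtCK _)) (etrans gx00 (sqrtCK _)) (etrans gx01 heta1).
have [W1 [uW1 mW10 mW11]] := pair_map (x0 := fun k => s0 * ket_e e0 e1 eta0 k)
   (x1 := fun k => q1 * e0 k) (y0 := b ord0) (y1 := b ord_max)
   (etrans gy00 (sqrtCK _)) (etrans gy11 (sqrtCK _)) (etrans gy01 heta0').
pose Wt (t : 'I_2) := if t == ord0 then W0 else W1.
have uWt : forall t, unitary (Wt t) by move=> t; rewrite /Wt; case: ifP.
exists q0, q1, eta0, eta1, (comp UR (blk Wt)); split.
  split.
  - have l0 : q0 <= 1 by rewrite /q0 -sqrtC1 ler_sqrtC ?nnegrE ?ler01 // -h0 lerDl.
    have l1 : q1 <= 1 by rewrite /q1 -sqrtC1 ler_sqrtC ?nnegrE ?ler01 // -h1 lerDr.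
    by rewrite gq0 gq1 l0 l1.
  - by rewrite /in_disk neta0 neta1.
  - by rewrite hs0 hs1 -h01 -heta1 -heta0'; ring.
  - exact: unitary_comp (blk_unitary uWt).
have hFv : forall i p, app (blk Wt) (fwd_basis e0 e1 q0 q1 eta0 eta1 i) p = Gv i p.
  move=> i [t k]; rewrite app_blk.
  have [->|->] := I2_cases i; have [->|->] := I2_cases t; rewrite /Wt /=.
  - rewrite -[RHS]/(a ord0 k) -mW00; apply: app_ext => k'; by rewrite /fwd_basis.
  - rewrite -[RHS]/(b ord0 k) -mW10; apply: app_ext => k'; by rewrite /fwd_basis /= hs0.
  - rewrite -[RHS]/(a ord_max k) -mW01; apply: app_ext => k'; by rewrite /fwd_basis /= hs1.
  - rewrite -[RHS]/(b ord_max k) -mW11; apply: app_ext => k'; by rewrite /fwd_basis.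
have hkey : forall m (psi : 'I_m -> 'I_2 -> C) a1 p,
    app (blk Wt) (fwd_restricted v e0 e1 q0 q1 eta0 eta1 psi a1) p = fwd_collective UF chi psi a1 p.
  move=> m psi a1 p.
  transitivity (\sum_(i < 2) dotv (v i) (psi a1) * Gv i p).
    rewrite /fwd_restricted /app.
    under eq_bigr => p' _ do rewrite mulr_sumr.
    rewrite exchange_big; apply: eq_bigr => i _ /=.
    rewrite -hFv /app mulr_sumr; apply: eq_bigr => p' _; ring.
  rewrite /fwd_collective /Gv /app.
  under eq_bigr => i _ do rewrite mulr_sumr.
  rewrite exchange_big; apply: eq_bigr => p' _ /=.
  rewrite [psi a1 p'.1](hvc (psi a1) p'.1) mulr_suml mulr_sumr; apply: eq_bigr => i _; ring.
move=> m psi _ O a1 b1 te.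
change (app (comp UR (blk Wt)) (bob_step O (fwd_restricted v e0 e1 q0 q1 eta0 eta1 psi) a1 b1) te
  = app UR (bob_step O (fwd_collective UF chi psi) a1 b1) te).
rewrite app_comp; apply: app_ext => p.
rewrite blk_bob !bob_formula /=; congr (_ * _); exact: hkey.
Qed.
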